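(* Let $S$ be a set of $n\ge 3$ points in the plane in general position (no four points of $S$ cocircular, no three collinear). For $i=0,\dots,n-3$ let $c_i$ be the number of 3-element subsets $\{a,b,c\}\subseteq S$ whose circumscribed circle contains exactly $i$ points of $S$ in its interior. Then for every $i\in\{0,\dots,n-3\}$, $$c_i+c_{n-i-3} = 2(i+1)(n-2-i).$$ In particular this sum is independent of the positions of the points of $S$.
   Context: Under the general position assumption every three points of $S$ determine a unique circle passing through them, and no other point of $S$ lies on it; the order of such a circle is the number of points of $S$ strictly inside it. *)

(* Defs.v *)
From HB Require Import structures.
From mathcomp Require Import all_boot all_order all_algebra.
From mathcomp Require Import boolp.
Set Implicit Arguments. Unset Strict Implicit. Unset Printing Implicit Defensive.
Import Order.TTheory GRing.Theory Num.Theory.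
Local Open Scope ring_scope.

Section Geometry.
Variable R : realFieldType.
Definition point := (R * R)%type.

Definition dist2 (x y : point) : R := (x.1 - y.1) ^+ 2 + (x.2 - y.2) ^+ 2.

Definition collinear (a b c : point) : Prop :=
  (b.1 - a.1) * (c.2 - a.2) - (b.2 - a.2) * (c.1 - a.1) = 0.

Definition cocircular (a b c d : point) : Prop :=
  exists (O : point) (r : R), 0 < r /\
    dist2 O a = r /\ dist2 O b = r /\ dist2 O c = r /\ dist2 O d = r.

Definition general_position (n : nat) (p : 'I_n -> point) : Prop :=
  injective p /\
  (forall i j k : 'I_n, i != j -> i != k -> j != k -> ~ collinear (p i) (p j) (p k)) /\
  (forall i j k l : 'I_n, i != j -> i != k -> i != l -> j != k -> j != l -> k != l ->
      ~ cocircular (p i) (p j) (p k) (p l)).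

Definition in_circle (n : nat) (p : 'I_n -> point) (A : {set 'I_n}) (d : 'I_n) : Prop :=
  exists (O : point) (r : R),
    (forall x, x \in A -> dist2 O (p x) = r) /\ dist2 O (p d) < r.

Definition circle_order (n : nat) (p : 'I_n -> point) (A : {set 'I_n}) : nat :=
  #|[set d : 'I_n | `[< in_circle p A d >]]|.

Definition c_count (n : nat) (p : 'I_n -> point) (i : nat) : nat :=
  #|[set A : {set 'I_n} | (#|A| == 3)%N && (circle_order p A == i)]|.
End Geometry.

(* Main.v *)
From HB Require Import structures.
From mathcomp Require Import all_boot all_order all_algebra.
From mathcomp Require Import ring lra zify.
From mathcomp Require Import boolp.
Require Import Defs.
Set Implicit Arguments. Unset Strict Implicit. Unset Printing Implicit Defensive.
Import Order.TTheory GRing.Theory Num.Theory.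

(* Proof outline:
   - circle predicates are turned into incircle determinants;
   - inversion at a point v turns "circle through v,b,c has all other points on one
     side" into "bc is a convex hull edge" of the inverted set;
   - a Morse-type sweep with a generic linear functional shows that the number F(T) of
     triangles of an m-subset T with all other points of T on one side equals 2m-4;
   - double counting over subsets gives sum_i (c_i + c_{n-3-i}) C(i,k) = (2k+2) C(n,k+3),
     a unitriangular system whose unique solution is 2(i+1)(n-2-i). *)

Open Scope ring_scope.

Section Alg.
Variable R : realFieldType.
Implicit Types a b c d O : point R.

Definition orient a b c : R :=
  (b.1 - a.1) * (c.2 - a.2) - (b.2 - a.2) * (c.1 - a.1).

Definition det3c a b c d (za zb zc : R) : R :=
  let ax := a.1 - d.1 in let ay := a.2 - d.2 in
  let bx := b.1 - d.1 in let by_ := b.2 - d.2 in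
  let cx := c.1 - d.1 in let cy := c.2 - d.2 in
  ax * (by_ * zc - zb * cy) - ay * (bx * zc - zb * cx) + za * (bx * cy - by_ * cx).

Definition icirc a b c d : R :=
  det3c a b c d (dist2 d a) (dist2 d b) (dist2 d c).

Lemma icirc_O O a b c d :
  icirc a b c d = det3c a b c d (dist2 O a - dist2 O d) (dist2 O b - dist2 O d)
     (dist2 O c - dist2 O d).
Proof. rewrite /icirc /det3c /dist2 /=. ring. Qed.

Lemma icirc_circ O a b c d r :
  dist2 O a = r -> dist2 O b = r -> dist2 O c = r ->
  icirc a b c d = (r - dist2 O d) * orient a b c.
Proof.
move=> Ha Hb Hc; rewrite (icirc_O O) Ha Hb Hc /det3c /orient; ring.
Qed.

Definition ccenter a b c : point R :=
  let o := orient a b c in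
  let B := (b.1 ^+ 2 + b.2 ^+ 2) - (a.1 ^+ 2 + a.2 ^+ 2) in
  let C := (c.1 ^+ 2 + c.2 ^+ 2) - (a.1 ^+ 2 + a.2 ^+ 2) in
  ((B * (c.2 - a.2) - C * (b.2 - a.2)) / (2 * o),
   ((b.1 - a.1) * C - (c.1 - a.1) * B) / (2 * o)).

Lemma ccenterP a b c : orient a b c != 0 ->
  dist2 (ccenter a b c) b = dist2 (ccenter a b c) a /\
  dist2 (ccenter a b c) c = dist2 (ccenter a b c) a.
Proof.
move=> Ho; rewrite /dist2 /ccenter /=; move: Ho; rewrite /orient => Ho.
split; field; exact: Ho.
Qed.

End Alg.


Section Inv.
Variable R : realFieldType.
Implicit Types a b c d O x : point R.

Definition inv c x : point R :=
  (c.1 + (x.1 - c.1) / dist2 c x, c.2 + (x.2 - c.2) / dist2 c x).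
Definition shear (e : R) (u : point R) : point R := (u.1 + e * u.2, u.2).
Definition qv e c x := shear e (inv c x).

Lemma orient_shear e a b c : orient (shear e a) (shear e b) (shear e c) = orient a b c.
Proof. rewrite /orient /shear /=; ring. Qed.

Lemma dist2_gt0 a b : a != b -> 0 < dist2 a b.
Proof.
case: a => a1 a2; case: b => b1 b2 /= Hne; rewrite /dist2 /=.
rewrite lt_neqAle addr_ge0 ?sqr_ge0 // andbT eq_sym paddr_eq0 ?sqr_ge0 //.
rewrite !sqrf_eq0 !subr_eq0; apply: contra Hne => /andP [/eqP -> /eqP ->] //.
Qed.

Lemma orient_inv c b d x : c != b -> c != d -> c != x ->
  orient (inv c b) (inv c d) (inv c x) * (dist2 c b * dist2 c d * dist2 c x) =
  - icirc c b d x.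
Proof.
move=> Hb Hd Hx.
have := dist2_gt0 Hb; have := dist2_gt0 Hd; have := dist2_gt0 Hx.
case: c b d x {Hb Hd Hx} => [c1 c2] [b1 b2] [d1 d2] [x1 x2].
rewrite /orient /inv /icirc /det3c /dist2 /= => Hx Hd Hb.
field. by rewrite !gt_eqF.
Qed.

End Inv.


Section Planar.
Variable R : realFieldType.
Variable I : finType.
Variable q : I -> point R.
Variable Q : {set I}.
Variable k0 : R.
Hypothesis Hline : forall x, x \in Q -> (q x).1 != k0.
Hypothesis Hgp : forall b c d, b \in Q -> c \in Q -> d \in Q ->
  b != c -> b != d -> c != d -> orient (q b) (q c) (q d) != 0.

Definition heP b c := [forall x, ((x \in Q) && (x != b) && (x != c)) ==>
   (0 < orient (q b) (q c) (q x))].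
Definition heN b c := [forall x, ((x \in Q) && (x != b) && (x != c)) ==>
   (orient (q b) (q c) (q x) < 0)].
Definition he b c := heP b c || heN b c.

Definition cr (de : I * I) := [&& de.1 \in Q, de.2 \in Q, (q de.1).1 < k0 & k0 < (q de.2).1].

Definition Y (de : I * I) :=
  (q de.1).2 + (k0 - (q de.1).1) * ((q de.2).2 - (q de.1).2) / ((q de.2).1 - (q de.1).1).

Lemma orient_aab (a b : point R) : orient a a b = 0. Proof. rewrite /orient; ring. Qed.
Lemma orient_aba (a b : point R) : orient a b a = 0. Proof. rewrite /orient; ring. Qed.
Lemma orient_abb (a b : point R) : orient a b b = 0. Proof. rewrite /orient; ring. Qed.

Lemma Yid b c d e : (q b).1 != (q c).1 -> (q d).1 != (q e).1 ->
  ((q c).1 - (q b).1) * (Y (d, e) - Y (b, c)) * ((q e).1 - (q d).1) =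
  ((q e).1 - k0) * orient (q b) (q c) (q d) + (k0 - (q d).1) * orient (q b) (q c) (q e).
Proof.
rewrite /Y /orient /=.
case: (q b) => b1 b2; case: (q c) => c1 c2; case: (q d) => d1 d2; case: (q e) => e1 e2 /=.
move=> H1 H2; field.
by rewrite !subr_eq0 eq_sym H1 eq_sym H2.
Qed.

Lemma cr_neq1 de : cr de -> (q de.1).1 != (q de.2).1.
Proof. case/and4P=> _ _ h1 h2; rewrite lt_eqF //; exact: lt_trans h1 h2. Qed.

Lemma Ycmp b c d e : cr (b, c) -> cr (d, e) ->
  let o1 := orient (q b) (q c) (q d) in let o2 := orient (q b) (q c) (q e) in
  ((0 <= o1) && (0 <= o2) && ((0 < o1) || (0 < o2)) -> Y (b, c) < Y (d, e)) /\
  ((o1 <= 0) && (o2 <= 0) && ((o1 < 0) || (o2 < 0)) -> Y (d, e) < Y (b, c)).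
Proof.
move=> Hbc Hde o1 o2.
have H := Yid (cr_neq1 Hbc) (cr_neq1 Hde).
move: Hbc Hde => /and4P [_ _ hb hc] /and4P [_ _ hd he'] /=.
have A : 0 < (q c).1 - (q b).1 by rewrite subr_gt0 (lt_trans hb hc).
have B : 0 < (q e).1 - (q d).1 by rewrite subr_gt0 (lt_trans hd he').
have C : 0 < (q e).1 - k0 by rewrite subr_gt0.
have D : 0 < k0 - (q d).1 by rewrite subr_gt0.
move: H; rewrite -/o1 -/o2 => H.
simpl in H.
split.
- case/andP => /andP [h1 h2] h3.
  have : 0 < ((q c).1 - (q b).1) * (Y (d, e) - Y (b, c)) * ((q e).1 - (q d).1).
    rewrite H; case/orP: h3 => h3.
      have := mulr_gt0 C h3; have := mulr_ge0 (ltW D) h2; lra.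
    have := mulr_gt0 D h3; have := mulr_ge0 (ltW C) h1; lra.
  by rewrite pmulr_lgt0 // pmulr_rgt0 // subr_gt0.
- case/andP => /andP [h1 h2] h3.
  have : ((q c).1 - (q b).1) * (Y (d, e) - Y (b, c)) * ((q e).1 - (q d).1) < 0.
    rewrite H; case/orP: h3 => h3.
      have := pmulr_rlt0 _ C; move/(_ o1); rewrite h3 => h4.
      have := mulr_ge0_le0 (ltW D) h2; lra.
    have := pmulr_rlt0 _ D; move/(_ o2); rewrite h3 => h4.
    have := mulr_ge0_le0 (ltW C) h1; lra.
  by rewrite pmulr_llt0 // pmulr_rlt0 // subr_lt0.
Qed.


Lemma heP_gt b c x : heP b c -> x \in Q -> x != b -> x != c ->
  0 < orient (q b) (q c) (q x).
Proof. by move=> /forallP /(_ x) /implyP H xQ xb xc; apply: H; rewrite xQ xb xc. Qed.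

Lemma heN_lt b c x : heN b c -> x \in Q -> x != b -> x != c ->
  orient (q b) (q c) (q x) < 0.
Proof. by move=> /forallP /(_ x) /implyP H xQ xb xc; apply: H; rewrite xQ xb xc. Qed.

Lemma heP_ge b c x : heP b c -> x \in Q -> 0 <= orient (q b) (q c) (q x).
Proof.
move=> H xQ; case: (eqVneq x b) => [->|xb]; first by rewrite orient_aba.
case: (eqVneq x c) => [->|xc]; first by rewrite orient_abb.
by rewrite ltW // heP_gt.
Qed.

Lemma heN_le b c x : heN b c -> x \in Q -> orient (q b) (q c) (q x) <= 0.
Proof.
move=> H xQ; case: (eqVneq x b) => [->|xb]; first by rewrite orient_aba.
case: (eqVneq x c) => [->|xc]; first by rewrite orient_abb.
by rewrite ltW // heN_lt.
Qed.

Lemma lu_neq x y : (q x).1 < k0 -> k0 < (q y).1 -> x != y.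
Proof.
move=> h1 h2; apply/eqP => exy; move: h2; rewrite -exy => h2.
by move: (lt_trans h1 h2); rewrite ltxx.
Qed.

Lemma maxN de : cr de -> (forall de', cr de' -> Y de' <= Y de) -> heN de.1 de.2.
Proof.
case: de => d e Hde Hm /=; apply/forallP => x; apply/implyP => /andP [/andP [xQ xd] xe].
have /and4P [dQ eQ hd he'] := Hde.
have dx : d != x by rewrite eq_sym.
have ex : e != x by rewrite eq_sym.
have o := Hgp dQ eQ xQ (lu_neq hd he') dx ex.
case: (ltgtP (orient (q d) (q e) (q x)) 0) => // Hpos; last by rewrite Hpos eqxx in o.
have := Hline xQ; case: (ltgtP (q x).1 k0) => // hx _.
- have crxe : cr (x, e) by rewrite /cr /= xQ eQ hx he'.
  have [H1 _] := Ycmp Hde crxe.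
  have := Hm _ crxe; rewrite leNgt H1 //=.
  by rewrite orient_abb lexx (ltW Hpos) Hpos.
- have crdx : cr (d, x) by rewrite /cr /= xQ dQ hx hd.
  have [H1 _] := Ycmp Hde crdx.
  have := Hm _ crdx; rewrite leNgt H1 //=.
  by rewrite orient_aba lexx (ltW Hpos) Hpos orbT.
Qed.

Lemma minP de : cr de -> (forall de', cr de' -> Y de <= Y de') -> heP de.1 de.2.
Proof.
case: de => d e Hde Hm /=; apply/forallP => x; apply/implyP => /andP [/andP [xQ xd] xe].
have /and4P [dQ eQ hd he'] := Hde.
have dx : d != x by rewrite eq_sym.
have ex : e != x by rewrite eq_sym.
have o := Hgp dQ eQ xQ (lu_neq hd he') dx ex.
case: (ltgtP (orient (q d) (q e) (q x)) 0) => // Hneg; last by rewrite Hneg eqxx in o.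
have := Hline xQ; case: (ltgtP (q x).1 k0) => // hx _.
- have crxe : cr (x, e) by rewrite /cr /= xQ eQ hx he'.
  have [_ H1] := Ycmp Hde crxe.
  have := Hm _ crxe; rewrite leNgt H1 //=.
  by rewrite orient_abb lexx (ltW Hneg) Hneg.
- have crdx : cr (d, x) by rewrite /cr /= xQ dQ hx hd.
  have [_ H1] := Ycmp Hde crdx.
  have := Hm _ crdx; rewrite leNgt H1 //=.
  by rewrite orient_aba lexx (ltW Hneg) Hneg orbT.
Qed.

Hypothesis HQ3 : (2 < #|Q|)%N.

Lemma third d e : exists2 x, x \in Q & (x != d) && (x != e).
Proof.
have : ~~ (Q \subset [set d; e]).
  apply/negP => /subset_leq_card; rewrite cards2; case: (d != e) => /=.
    by rewrite leqNgt HQ3.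
  by move=> h; move: (leq_trans HQ3 h).
by case/subsetPn => x xQ; rewrite !inE negb_or => H; exists x.
Qed.

Lemma planar2 : (exists2 x, x \in Q & (q x).1 < k0) -> (exists2 x, x \in Q & k0 < (q x).1) ->
  #|[set de | cr de && he de.1 de.2]| = 2%N.
Proof.
move=> [xl xlQ hl] [xu xuQ hu].
have Hne : cr (xl, xu) by rewrite /cr /= xlQ xuQ hl hu.
have [Emax HPmax Hmax] := @arg_maxP _ _ _ (xl, xu) (fun de => cr de) Y Hne.
have [Emin HPmin Hmin] := @arg_minP _ _ _ (xl, xu) (fun de => cr de) Y Hne.
have hN := maxN HPmax Hmax.
have hP := minP HPmin Hmin.
have Hneq : Emax != Emin.
  apply/eqP => E; move: hN; rewrite E => hN.
  have [x xQ /andP [x1 x2]] := third Emin.1 Emin.2.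
  have := heP_gt hP xQ x1 x2; have := heN_lt hN xQ x1 x2.
  by move=> h1 h2; move: (lt_trans h1 h2); rewrite ltxx.
suff -> : [set de | cr de && he de.1 de.2] = [set Emax; Emin] by rewrite cards2 Hneq.
apply/setP => de; rewrite !inE; apply/idP/idP; last first.
  by case/orP => /eqP ->; rewrite /he ?HPmax ?HPmin ?hN ?hP ?orbT.
case/andP => Hcr Hhe; apply: contraT; rewrite negb_or => /andP [n1 n2].
move: Hcr Hhe n1 n2; case: de => b c Hcr Hhe n1 n2.
have /and4P [bQ cQ hb hc] := Hcr.
case/orP: Hhe => /= Hs.
- move: HPmin Hmin n2; clear hP Hneq n1; case: Emin => d e HPmin Hmin n2.
  have /and4P [dQ eQ hd he'] := HPmin.
  have [H1 _] := Ycmp Hcr HPmin.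
  have := Hmin _ Hcr; rewrite leNgt H1 //.
  rewrite !heP_ge //=.
  case: (eqVneq d b) => [edb|ndb]; last by rewrite heP_gt // (lu_neq hd hc).
  have neb : e != b by rewrite eq_sym (lu_neq hb he').
  have nec : e != c by apply: contraNneq n2 => ec; rewrite edb ec.
  by rewrite (heP_gt Hs eQ neb nec) orbT.
- move: HPmax Hmax n1; clear hN Hneq n2; case: Emax => d e HPmax Hmax n1.
  have /and4P [dQ eQ hd he'] := HPmax.
  have [_ H1] := Ycmp Hcr HPmax.
  have := Hmax _ Hcr; rewrite /= leNgt H1 //.
  rewrite !heN_le //=.
  case: (eqVneq d b) => [edb|ndb]; last by rewrite heN_lt // (lu_neq hd hc).
  have neb : e != b by rewrite eq_sym (lu_neq hb he').
  have nec : e != c by apply: contraNneq n1 => ec; rewrite edb ec.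
  by rewrite (heN_lt Hs eQ neb nec) orbT.
Qed.

End Planar.


Section Geo.
Variable R : realFieldType.
Variable n : nat.
Variable p : 'I_n -> point R.
Hypothesis gp : general_position p.

Lemma p_inj : injective p. Proof. by case: gp. Qed.

Lemma ncol i j k : i != j -> i != k -> j != k -> orient (p i) (p j) (p k) != 0.
Proof. by case: gp => _ [H _] ij ik jk; apply/eqP; apply: H. Qed.

Lemma sq_gt0 (o : R) : o != 0 -> 0 < o * o.
Proof. by move=> Ho; rewrite -expr2 exprn_even_gt0 //= Ho orbT. Qed.

Definition inC i j k d :=
  0 < orient (p i) (p j) (p k) * icirc (p i) (p j) (p k) (p d).

Lemma in_circleE i j k d : i != j -> i != k -> j != k ->
  in_circle p [set i; j; k] d <-> inC i j k d.
Proof.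
move=> ij ik jk; have Ho := ncol ij ik jk.
split.
- case=> O [r [Hall Hd]].
  have Hi : dist2 O (p i) = r by apply: Hall; rewrite !inE eqxx.
  have Hj : dist2 O (p j) = r by apply: Hall; rewrite !inE eqxx orbT.
  have Hk : dist2 O (p k) = r by apply: Hall; rewrite !inE eqxx !orbT.
  rewrite /inC (icirc_circ (p d) Hi Hj Hk) mulrCA.
  by rewrite mulr_gt0 // ?subr_gt0 // sq_gt0.
- rewrite /inC => H.
  have [Hj Hk] := ccenterP Ho.
  set O := ccenter _ _ _ in Hj Hk.
  have Hi : dist2 O (p i) = dist2 O (p i) by [].
  move: H; rewrite (icirc_circ (p d) Hi Hj Hk) mulrCA pmulr_lgt0 ?sq_gt0 // => H.
  move: H; rewrite subr_gt0 => H.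
  exists O, (dist2 O (p i)); split => // x; rewrite !inE => /orP [/orP [] | ] /eqP -> //.
Qed.

Lemma dist2_eq0 (a b : point R) : dist2 a b = 0 -> a = b.
Proof.
move=> H; apply/eqP; apply: contraT => /dist2_gt0; by rewrite H ltxx.
Qed.

Lemma icirc_neq0 i j k d : i != j -> i != k -> j != k -> d != i -> d != j -> d != k ->
  icirc (p i) (p j) (p k) (p d) != 0.
Proof.
move=> ij ik jk di dj dk; have Ho := ncol ij ik jk.
have [Hj Hk] := ccenterP Ho.
set O := ccenter _ _ _ in Hj Hk.
have Hi : dist2 O (p i) = dist2 O (p i) by [].
rewrite (icirc_circ (p d) Hi Hj Hk) mulf_eq0 negb_or Ho andbT subr_eq0.
apply/eqP => Hd.
case: gp => _ [_ H]; apply: (H i j k d) => //; first by rewrite eq_sym.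
  by rewrite eq_sym.
  by rewrite eq_sym.
exists O, (dist2 O (p i)); split; last by rewrite Hj Hk -Hd.
rewrite lt_neqAle eq_sym; apply/andP; split; last by rewrite /dist2 addr_ge0 ?sqr_ge0.
apply/eqP => Hd0; have Ei := dist2_eq0 Hd0; move: Hj; rewrite Hd0 => /dist2_eq0 Ej.
by move/eqP: ij; apply; apply: p_inj; rewrite -Ei -Ej.
Qed.

End Geo.


Definition key (R : realFieldType) (e : R) (x : point R) := x.1 + e * x.2.

Lemma qv1 (R : realFieldType) (e : R) c x :
  (qv e c x).1 = key e c + (key e x - key e c) / dist2 c x.
Proof. rewrite /qv /shear /inv /key /=; ring. Qed.

Section Bridge.
Variable R : realFieldType.
Variable n : nat.
Variable p : 'I_n -> point R.
Hypothesis gp : general_position p.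

Lemma exists_eps : exists e : R, forall i j, key e (p i) = key e (p j) -> i = j.
Proof.
pose bad (ij : 'I_n * 'I_n) := ((p ij.1).1 - (p ij.2).1) / ((p ij.1).2 - (p ij.2).2).
pose S := \sum_(ij : 'I_n * 'I_n) `|bad ij|.
have S0 : 0 <= S by apply: sumr_ge0 => ij _; rewrite normr_ge0.
exists (1 + S) => i j; rewrite /key => H.
apply: contra_eq H => ij.
case: (eqVneq (p i).2 (p j).2) => Hy.
  rewrite Hy; apply/eqP => /addIr Hx; move/eqP: ij; apply; apply: (p_inj gp).
  by rewrite [p i]surjective_pairing [p j]surjective_pairing Hx Hy.
apply/eqP => H.
have He : 1 + S = - bad (i, j).
  rewrite /bad /= -mulNr; apply: (@mulIf _ ((p i).2 - (p j).2)); first by rewrite subr_eq0.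
  rewrite mulfVK ?subr_eq0 //.
  by apply/eqP; rewrite -subr_eq0; apply/eqP; move: H; set a := (1 + S) => H; rewrite -[0](subrr ((p j).1 + a * (p j).2)) -{1}H; ring.
have Hle : `|bad (i, j)| <= S.
  rewrite /S (bigD1 (i, j)) //= lerDl; apply: sumr_ge0 => ? _; exact: normr_ge0.
move: Hle; rewrite -normrN -He ger0_norm; last by rewrite addr_ge0.
move=> h; lra.
Qed.

End Bridge.

Section Bridge2.
Variable R : realFieldType.
Variable n : nat.
Variable p : 'I_n -> point R.
Hypothesis gp : general_position p.
Variable e : R.
Hypothesis Hkey : forall i j, key e (p i) = key e (p j) -> i = j.
Variable T : {set 'I_n}.

Definition fac v b c :=
  [forall x, ((x \in T :\ v) && (x != b) && (x != c)) ==> inC p v b c x] ||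
  [forall x, ((x \in T :\ v) && (x != b) && (x != c)) ==> ~~ inC p v b c x].

Definition qq v := fun x => qv e (p v) (p x).

Lemma key_neq i j : i != j -> key e (p i) != key e (p j).
Proof. by apply: contra => /eqP /Hkey ->. Qed.

Lemma pneq i j : i != j -> p i != p j.
Proof. by apply: contra => /eqP /(p_inj gp) ->. Qed.

Lemma D_gt0 i j : i != j -> 0 < dist2 (p i) (p j).
Proof. by move=> /pneq /dist2_gt0. Qed.

Lemma lowerE v x : v != x -> ((qq v x).1 < key e (p v)) = (key e (p x) < key e (p v)).
Proof.
move=> vx; rewrite /qq qv1 gtrDl pmulr_llt0 ?invr_gt0 ?D_gt0 // subr_lt0 //.
Qed.

Lemma upperE v x : v != x -> (key e (p v) < (qq v x).1) = (key e (p v) < key e (p x)).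
Proof.
move=> vx; rewrite /qq qv1 ltrDl pmulr_lgt0 ?invr_gt0 ?D_gt0 // subr_gt0 //.
Qed.

Lemma line_neq v x : v != x -> (qq v x).1 != key e (p v).
Proof.
move=> vx; rewrite /qq qv1 -subr_eq0 addrAC subrr add0r mulf_eq0 invr_eq0 negb_or.
by rewrite subr_eq0 key_neq 1?eq_sym //= lt_eqF // D_gt0.
Qed.

Lemma orient_qq v b c x : v != b -> v != c -> v != x ->
  orient (qq v b) (qq v c) (qq v x) *
    (dist2 (p v) (p b) * dist2 (p v) (p c) * dist2 (p v) (p x)) =
  - icirc (p v) (p b) (p c) (p x).
Proof.
by move=> vb vc vx; rewrite /qq /qv orient_shear orient_inv // pneq.
Qed.

Lemma orient_qq_pos v b c x : v != b -> v != c -> v != x ->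
  (0 < orient (qq v b) (qq v c) (qq v x)) = (icirc (p v) (p b) (p c) (p x) < 0).
Proof.
move=> vb vc vx; have E := orient_qq vb vc vx.
have P : 0 < dist2 (p v) (p b) * dist2 (p v) (p c) * dist2 (p v) (p x).
  by rewrite !mulr_gt0 ?D_gt0.
by rewrite -(pmulr_lgt0 _ P) E oppr_gt0.
Qed.

Lemma orient_qq_neg v b c x : v != b -> v != c -> v != x ->
  (orient (qq v b) (qq v c) (qq v x) < 0) = (0 < icirc (p v) (p b) (p c) (p x)).
Proof.
move=> vb vc vx; have E := orient_qq vb vc vx.
have P : 0 < dist2 (p v) (p b) * dist2 (p v) (p c) * dist2 (p v) (p x).
  by rewrite !mulr_gt0 ?D_gt0.
by rewrite -(pmulr_llt0 _ P) E oppr_lt0.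
Qed.

Lemma he_fac v b c : b \in T :\ v -> c \in T :\ v -> b != c ->
  he (qq v) (T :\ v) b c = fac v b c.
Proof.
move=> bT cT bc.
have vb : v != b by move: bT; rewrite !inE eq_sym => /andP [].
have vc : v != c by move: cT; rewrite !inE eq_sym => /andP [].
have o := ncol gp vb vc bc.
have Hic x : (x \in T :\ v) && (x != b) && (x != c) ->
    icirc (p v) (p b) (p c) (p x) != 0.
  case/andP => /andP [xT xb] xc; have xv : x != v by move: xT; rewrite !inE => /andP [].
  exact: icirc_neq0.
have Hxv x : (x \in T :\ v) -> v != x by rewrite !inE eq_sym => /andP [].
rewrite /he /fac /heP /heN /inC.
case: (ltgtP (orient (p v) (p b) (p c)) 0) => Ho; last by rewrite Ho eqxx in o.
- congr (_ || _); apply: eq_forallb => x; case G : (_ && _ && _) => //=.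
    rewrite orient_qq_pos // ?Hxv //; last by move: G => /andP [/andP []].
    by rewrite nmulr_rgt0.
  rewrite orient_qq_neg // ?Hxv //; last by move: G => /andP [/andP []].
  rewrite nmulr_rgt0 // -leNgt le_eqVlt.
  by rewrite eq_sym (negbTE (Hic x G)).
- rewrite orbC; congr (_ || _); apply: eq_forallb => x; case G : (_ && _ && _) => //=.
    rewrite orient_qq_neg // ?Hxv //; last by move: G => /andP [/andP []].
    by rewrite pmulr_rgt0.
  rewrite orient_qq_pos // ?Hxv //; last by move: G => /andP [/andP []].
  rewrite pmulr_rgt0 // -leNgt le_eqVlt.
  by rewrite (negbTE (Hic x G)).
Qed.

End Bridge2.


Section Xv.
Variable R : realFieldType.
Variable n : nat.
Variable p : 'I_n -> point R.
Hypothesis gp : general_position p.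
Variable e : R.
Hypothesis Hkey : forall i j, key e (p i) = key e (p j) -> i = j.
Variable T : {set 'I_n}.

Definition Xv v := [set wc : 'I_n * 'I_n | [&& wc.1 \in T :\ v, wc.2 \in T :\ v,
  key e (p wc.1) < key e (p v), key e (p v) < key e (p wc.2) & fac p T v wc.1 wc.2]].

Definition haslu v := [exists x in T, key e (p x) < key e (p v)] &&
                      [exists x in T, key e (p v) < key e (p x)].

Lemma Xv_card v : v \in T -> (4 <= #|T|)%N -> #|Xv v| = if haslu v then 2%N else 0%N.
Proof.
move=> vT T4.
have Hxv x : (x \in T :\ v) -> v != x by rewrite !inE eq_sym => /andP [].
case: ifP => Hlu; last first.
  apply/eqP; rewrite cards_eq0; apply/eqP/setP => [[w c]]; rewrite !inE /=.
  apply/negP => /and5P [/andP [_ wT] /andP [_ cT] h1 h2 _].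
  suff: haslu v by rewrite Hlu.
  apply/andP; split; apply/existsP.
    by exists w; rewrite wT.
  by exists c; rewrite cT.
have HQ3 : (3 <= #|T :\ v|)%N.
  by move: T4; rewrite (cardsD1 v T) vT.
have Hline x : x \in T :\ v -> (qq p e v x).1 != key e (p v).
  by move=> /Hxv; apply: line_neq.
have Hgp' b c d : b \in T :\ v -> c \in T :\ v -> d \in T :\ v ->
    b != c -> b != d -> c != d -> orient (qq p e v b) (qq p e v c) (qq p e v d) != 0.
  move=> bT cT dT bc bd cd; apply/eqP => H0.
  have := orient_qq gp e (Hxv _ bT) (Hxv _ cT) (Hxv _ dT); rewrite H0 mul0r => /esym/eqP.
  have vb := Hxv _ bT; have vc := Hxv _ cT; have vd := Hxv _ dT.
  rewrite oppr_eq0; apply/negP; apply: icirc_neq0 => //; by rewrite eq_sym.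
have [/existsP [xl /andP [xlT hl]] /existsP [xu /andP [xuT hu]]] := andP Hlu.
have xlQ : xl \in T :\ v by rewrite !inE xlT andbT; apply: contraTneq hl => ->; rewrite ltxx.
have xuQ : xu \in T :\ v by rewrite !inE xuT andbT; apply: contraTneq hu => ->; rewrite ltxx.
rewrite -(planar2 Hline Hgp' HQ3).
- apply: eq_card => [[w c]]; rewrite /cr !inE /=.
  case wQ : ((w != v) && (w \in T)); case cQ : ((c != v) && (c \in T)) => //=.
  have wQ' : w \in T :\ v by rewrite !inE.
  have cQ' : c \in T :\ v by rewrite !inE.
  rewrite lowerE ?upperE ?Hxv //.
  case h1 : (key e (p w) < key e (p v)); case h2 : (key e (p v) < key e (p c)) => //=.
  rewrite he_fac //.
  apply/eqP => ewc; move: h1; rewrite ewc => h1.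
  by move: (lt_trans h1 h2); rewrite ltxx.
- by exists xl => //; rewrite lowerE ?Hxv.
- by exists xu => //; rewrite upperE ?Hxv.
Qed.

End Xv.


Lemma card3P (I : finType) (A : {set I}) : #|A| = 3%N ->
  exists a b c, [/\ a != b, a != c, b != c & A = [set a; b; c]].
Proof.
move=> HA; have : (0 < #|A|)%N by rewrite HA.
case/card_gt0P => a aA.
have H2 : #|A :\ a| = 2%N by move: HA; rewrite (cardsD1 a A) aA => -[].
have /cards2P [b [c [bc E]]] : #|A :\ a| == 2%N by rewrite H2.
have : b \in A :\ a by rewrite E !inE eqxx.
have : c \in A :\ a by rewrite E !inE eqxx orbT.
rewrite !inE => /andP [ca _] /andP [ba _].
exists a, b, c; split => //; try by rewrite eq_sym.
by rewrite -(setD1K aA) E setUA.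
Qed.

Lemma cards3 (I : finType) (a b c : I) : a != b -> a != c -> b != c ->
  #|[set a; b; c]| = 3%N.
Proof.
move=> ab ac bc; rewrite -setUA cardsU1 cards2 bc !inE negb_or ab ac.
by [].
Qed.

Section Morse.
Variable R : realFieldType.
Variable n : nat.
Variable p : 'I_n -> point R.
Hypothesis gp : general_position p.
Variable e : R.
Hypothesis Hkey : forall i j, key e (p i) = key e (p j) -> i = j.
Variable T : {set 'I_n}.

Definition In (A : {set 'I_n}) := [set d | `[< in_circle p A d >]].
Definition Out (A : {set 'I_n}) := ~: (A :|: In A).
Definition FAC (A : {set 'I_n}) := (T :\: A \subset In A) || (T :\: A \subset Out A).

Lemma fac_FAC v b c : v != b -> v != c -> b != c ->
  fac p T v b c = FAC [set v; b; c].
Proof.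
move=> vb vc bc.
have G x : (x \in T :\: [set v; b; c]) = ((x \in T :\ v) && (x != b) && (x != c)).
  by rewrite !inE !negb_or; case: (x \in T); case: (x == v); rewrite ?andbF //= ?andbT.
have Hin x : (x \in In [set v; b; c]) = inC p v b c x.
  rewrite inE; apply/asboolP/idP; by move/(in_circleE gp _ vb vc bc).
rewrite /fac /FAC; congr (_ || _).
- apply/forallP/subsetP => H x.
    by rewrite G Hin => Hx; have := H x; rewrite Hx.
  by apply/implyP; rewrite -G -Hin; apply: H.
- apply/forallP/subsetP => H x.
    rewrite G => Hx; have := H x; rewrite Hx /= => Hn.
    rewrite in_setC in_setU Hin negb_or Hn andbT.
    by move: Hx; rewrite -G !inE => /andP [].
  apply/implyP; rewrite -G => Hx; have := H x Hx.
  by rewrite in_setC in_setU Hin negb_or => /andP [].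
Qed.

End Morse.

Lemma s3_213 (I : finType) (x y z : I) : [set x; y; z] = [set y; x; z].
Proof. by apply/setP => t; rewrite !inE; case: (t == x); case: (t == y); case: (t == z). Qed.
Lemma s3_132 (I : finType) (x y z : I) : [set x; y; z] = [set x; z; y].
Proof. by apply/setP => t; rewrite !inE; case: (t == x); case: (t == y); case: (t == z). Qed.
Lemma s3_321 (I : finType) (x y z : I) : [set x; y; z] = [set z; y; x].
Proof. by apply/setP => t; rewrite !inE; case: (t == x); case: (t == y); case: (t == z). Qed.
Lemma s3_312 (I : finType) (x y z : I) : [set x; y; z] = [set z; x; y].
Proof. by apply/setP => t; rewrite !inE; case: (t == x); case: (t == y); case: (t == z). Qed.
Lemma s3_231 (I : finType) (x y z : I) : [set x; y; z] = [set y; z; x].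
Proof. by apply/setP => t; rewrite !inE; case: (t == x); case: (t == y); case: (t == z). Qed.

Section Morse2.
Variable R : realFieldType.
Variable n : nat.
Variable p : 'I_n -> point R.
Hypothesis gp : general_position p.
Variable e : R.
Hypothesis Hkey : forall i j, key e (p i) = key e (p j) -> i = j.
Variable T : {set 'I_n}.

Local Notation k := (fun i => key e (p i)).

Lemma k_neq i j : i != j -> k i != k j.
Proof. by apply: contra => /eqP /Hkey ->. Qed.

Lemma set3_min v w c x : k w < k v -> k v < k c -> x \in [set v; w; c] -> k w <= k x.
Proof.
move=> h1 h2; rewrite !inE => /orP [/orP []|] /eqP -> //; rewrite ltW //.
exact: lt_trans h1 h2.
Qed.

Lemma set3_max v w c x : k w < k v -> k v < k c -> x \in [set v; w; c] -> k x <= k c.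
Proof.
move=> h1 h2; rewrite !inE => /orP [/orP []|] /eqP -> //; rewrite ltW //.
exact: lt_trans h1 h2.
Qed.

Lemma key_ord3 v w c v' w' c' : k w < k v -> k v < k c -> k w' < k v' -> k v' < k c' ->
  [set v; w; c] = [set v'; w'; c'] -> [/\ v = v', w = w' & c = c'].
Proof.
move=> h1 h2 h1' h2' E.
have M x : (x \in [set v; w; c]) = (x \in [set v'; w'; c']) by rewrite E.
have ew : w = w'.
  apply: Hkey; apply/eqP; rewrite eq_le.
  rewrite (set3_min h1 h2) ?(set3_min h1' h2') //; first by rewrite -M !inE eqxx orbT.
  by rewrite M !inE eqxx orbT.
have ec : c = c'.
  apply: Hkey; apply/eqP; rewrite eq_le.
  rewrite (set3_max h1' h2') ?(set3_max h1 h2) //; first by rewrite M !inE eqxx !orbT.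
  by rewrite -M !inE eqxx !orbT.
split => //.
have : v \in [set v'; w'; c'] by rewrite -M !inE eqxx.
rewrite !inE -ew -ec => /orP [/orP []|] /eqP // E'.
- by move: h1; rewrite E' ltxx.
- by move: h2; rewrite E' ltxx.
Qed.

Lemma sort3 a b c : a != b -> a != c -> b != c ->
  exists v w c', [/\ [set a; b; c] = [set v; w; c'], k w < k v & k v < k c'].
Proof.
move=> ab ac bc.
case/orP: (lt_total (k_neq ab)) => hab; case/orP: (lt_total (k_neq ac)) => hac;
case/orP: (lt_total (k_neq bc)) => hbc.
- by exists b, a, c; split => //; apply: s3_213.
- by exists c, a, b; split => //; apply: s3_312.
- by move: (lt_trans hab hbc); rewrite ltNge (ltW hac).
- by exists a, c, b; split => //; apply: s3_132.
- by exists a, b, c.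
- by move: (lt_trans hac hbc); rewrite ltNge (ltW hab).
- by exists c, b, a; split => //; apply: s3_321.
- by exists b, c, a; split => //; apply: s3_231.
Qed.

Definition Facets := [set A : {set 'I_n} | (A \subset T) && (#|A| == 3%N) && FAC p T A].
Definition S3 := [set t : 'I_n * ('I_n * 'I_n) | (t.1 \in T) && (t.2 \in Xv p e T t.1)].
Definition f3 (t : 'I_n * ('I_n * 'I_n)) := [set t.1; t.2.1; t.2.2].

Lemma S3_facets1 t : t \in S3 -> f3 t \in Facets.
Proof.
case: t => v [w c]; rewrite inE /= => /andP [vT].
rewrite inE /= => /and5P [/setD1P [wv wT] /setD1P [cv cT] h1 h2 F].
have wc : w != c by apply: contraTneq h1 => ->; rewrite -leNgt ltW.
have vw : v != w by rewrite eq_sym.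
have vc : v != c by rewrite eq_sym.
rewrite /f3 inE /=; apply/andP; split; last by rewrite -fac_FAC.
apply/andP; split; last by rewrite cards3.
by apply/subsetP => x; rewrite !inE => /orP [/orP []|] /eqP ->.
Qed.

Lemma S3_facets2 A : A \in Facets -> exists2 t, t \in S3 & A = f3 t.
Proof.
rewrite inE => /andP [/andP [AT /eqP A3] F].
have [a [b [c [ab ac bc EA]]]] := card3P A3.
have [v [w [c' [E h1 h2]]]] := sort3 ab ac bc.
rewrite E in EA; subst A.
have vT : v \in T by apply: (subsetP AT); rewrite !inE eqxx.
have wT : w \in T by apply: (subsetP AT); rewrite !inE eqxx orbT.
have cT : c' \in T by apply: (subsetP AT); rewrite !inE eqxx !orbT.
have wv : w != v by apply: contraTneq h1 => ->; rewrite ltxx.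
have cv : c' != v by apply: contraTneq h2 => ->; rewrite ltxx.
have wc : w != c' by apply: contraTneq h1 => ->; rewrite -leNgt ltW.
exists (v, (w, c')) => //.
rewrite inE /= vT /= inE /= !in_setD1 wv cv wT cT h1 h2 /=.
by rewrite fac_FAC // eq_sym.
Qed.

Lemma S3_facets : f3 @: S3 = Facets.
Proof.
apply/setP => A; apply/imsetP/idP.
  by case=> t tS ->; apply: S3_facets1.
exact: S3_facets2.
Qed.

Lemma S3_inj : {in S3 &, injective f3}.
Proof.
move=> [v [w c]] [v' [w' c']]; rewrite !inE /=.
move=> /andP [_ /and5P [_ _ h1 h2 _]] /andP [_ /and5P [_ _ h1' h2' _]] E.
by have [-> -> ->] := key_ord3 h1 h2 h1' h2' E.
Qed.

Lemma card_S3 : #|S3| = (\sum_(v in T) #|Xv p e T v|)%N.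
Proof.
rewrite -sum1_card.
rewrite (eq_bigl (fun t => (t.1 \in T) && (t.2 \in Xv p e T t.1))); last first.
  by move=> t; rewrite inE.
rewrite -(pair_big_dep (fun v => v \in T) (fun v wc => wc \in Xv p e T v) (fun _ _ => 1%N)).
by apply: eq_bigr => v _; rewrite sum1_card.
Qed.

Lemma haslu_card : (2 <= #|T|)%N -> #|[set v in T | haslu p e T v]| = (#|T| - 2)%N.
Proof.
move=> T2.
have : (0 < #|T|)%N by apply: leq_trans T2.
case/card_gt0P => x0 x0T.
have [vmin vminT Hmin] := @arg_minP _ _ _ x0 (mem T) k x0T.
have [vmax vmaxT Hmax] := @arg_maxP _ _ _ x0 (mem T) k x0T.
have {}vminT : vmin \in T by [].
have {}vmaxT : vmax \in T by [].
have lt_of x y : x != y -> k x <= k y -> k x < k y.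
  by move=> xy; rewrite le_eqVlt (negbTE (k_neq xy)).
have Hnh v : v \in T -> (~~ haslu p e T v) = (v == vmin) || (v == vmax).
  move=> vT; rewrite /haslu.
  case: (eqVneq v vmin) => [->|vn] /=.
    apply/negP => /andP [/exists_inP [x xT hx] _].
    by have := Hmin x xT; rewrite /= leNgt hx.
  case: (eqVneq v vmax) => [->|vx] /=.
    apply/negP => /andP [_ /exists_inP [x xT hx]].
    by have := Hmax x xT; rewrite /= leNgt hx.
  apply/negbF/andP; split; apply/exists_inP.
    exists vmin => //; apply: lt_of; [by rewrite eq_sym | exact: Hmin].
  exists vmax => //; apply: lt_of; [by [] | exact: Hmax].
have Hneq : vmin != vmax.
  have : (1 < #|T|)%N by [].
  rewrite (cardsD1 vmin T) vminT ltnS card_gt0 => /set0Pn [x].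
  rewrite !inE => /andP [xv xT]; apply/eqP => E.
  have h1 : k vmin < k x by rewrite lt_of 1?eq_sym //; exact: Hmin.
  have := Hmax x xT; rewrite /= -E leNgt h1 //.
have ED : T :\: [set v in T | haslu p e T v] = [set vmin; vmax].
  apply/setP => x; rewrite !inE.
  case xT : (x \in T) => /=; last first.
    by apply/esym/negbTE; rewrite negb_or; apply/andP; split;
       apply: contraFneq xT => ->.
  by rewrite andbT Hnh.
have := cardsID [set v in T | haslu p e T v] T.
rewrite ED cards2 Hneq.
have -> : T :&: [set v in T | haslu p e T v] = [set v in T | haslu p e T v].
  by apply/setP => x; rewrite !inE; case: (x \in T).
by move=> <-; rewrite addnK.
Qed.

Lemma Facets_card : (4 <= #|T|)%N -> #|Facets| = (2 * #|T| - 4)%N.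
Proof.
move=> T4.
rewrite -S3_facets card_in_imset; last exact: S3_inj.
rewrite card_S3.
rewrite (eq_bigr (fun v => if haslu p e T v then 2%N else 0%N)); last first.
  by move=> v vT; rewrite (Xv_card gp Hkey vT T4).
rewrite -big_mkcondr /= (eq_bigl (fun v => v \in [set v in T | haslu p e T v])); last first.
  by move=> v; rewrite inE.
rewrite sum_nat_const haslu_card; last by apply: leq_trans T4.
rewrite mulnBl mulnC; by [].
Qed.

End Morse2.


Close Scope ring_scope.

Lemma hockey M k : \sum_(i < M) 'C(i.+1, k.+1) = 'C(M.+1, k.+2).
Proof.
elim: M => [|M IH]; first by rewrite big_ord0 bin_small.
by rewrite big_ord_recr /= IH [RHS]binS.
Qed.

Lemma target_id N k : \sum_(i < N) i.+1 * (N - i) * 'C(i, k) = k.+1 * 'C(N.+2, k.+3).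
Proof.
elim: N => [|N IH]; first by rewrite big_ord0 bin_small ?muln0.
rewrite (eq_bigr (fun i : 'I_N.+1 => i.+1 * (N - i) * 'C(i, k) + k.+1 * 'C(i.+1, k.+1))); last first.
  move=> i _; have hi : i <= N by rewrite -ltnS.
  rewrite subSn // mulnS mulnDl addnC; congr (_ + _); exact: (mul_bin_diag i.+1 k).
rewrite big_split /= big_ord_recr /= subnn muln0 mul0n addn0 IH.
rewrite -big_distrr /= hockey -mulnDr.
by rewrite [in RHS]binS addnC.
Qed.

Lemma uniq_binom N (s g : nat -> nat) :
  (forall k, k < N -> \sum_(i < N) s i * 'C(i, k) = \sum_(i < N) g i * 'C(i, k)) ->
  forall i, i < N -> s i = g i.
Proof.
move=> H.
suff P : forall d i, N - d <= i -> i < N -> s i = g i.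
  by move=> i iN; apply: (P N) => //; rewrite subnn.
elim=> [|d IH] i h1 h2.
  by move: (leq_ltn_trans h1 h2); rewrite subn0 ltnn.
case: (leqP (N - d) i) => h3; first exact: IH.
have Ei : i.+1 = N - d by lia.
have := H i h2.
rewrite [X in X = _ -> _](bigD1 (Ordinal h2)) //= [X in _ = X -> _](bigD1 (Ordinal h2)) //= binn !muln1.
set S1 := (X in _ + X = _); set S2 := (X in _ = _ + X).
suff -> : S1 = S2 by move/addIn.
apply: eq_bigr => j /eqP jne.
case: (ltnP j i) => hj; first by rewrite bin_small // !muln0.
rewrite IH //.
have : j != i :> nat by apply/eqP => E; apply: jne; apply: val_inj.
lia.
Qed.


Lemma card_ext (I : finType) (A S : {set I}) k : (forall x, x \in A -> x \notin S) ->
  #|[set T : {set I} | (#|T| == #|A| + k) && (A \subset T) && (T :\: A \subset S)]| =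
  'C(#|S|, k).
Proof.
move=> HAS; rewrite -cards_draws.
have -> : [set T : {set I} | (#|T| == #|A| + k) && (A \subset T) && (T :\: A \subset S)] =
    (fun B : {set I} => A :|: B) @: [set B : {set I} | B \subset S & #|B| == k].
  apply/setP => T; rewrite inE; apply/idP/imsetP.
  - case/andP => /andP [/eqP cT AT] TS.
    exists (T :\: A).
      rewrite inE TS /= cardsD cT (setIidPr AT); apply/eqP; lia.
    apply/setP => x; rewrite !inE; case xA : (x \in A) => //=.
    by rewrite (subsetP AT).
  - case=> B; rewrite inE => /andP [BS /eqP cB] ->.
    have dis : A :&: B = set0.
      apply/setP => x; rewrite !inE; apply/negbTE; apply/negP => /andP [xA xB].
      by move: (HAS x xA); rewrite (subsetP BS).
    rewrite cardsU dis cards0 cB subn0 eqxx subsetUl /=.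
    apply/subsetP => x; rewrite !inE => /andP [xA /orP [xA'|xB]].
    - by rewrite xA' in xA.
    - exact: (subsetP BS).
rewrite card_in_imset // => B1 B2; rewrite !inE => /andP [B1S _] /andP [B2S _] E.
apply/setP => x; move/setP: E => /(_ x); rewrite !inE.
case xA : (x \in A) => //= _.
have := HAS x xA => xS.
by apply/idP/idP => h; [move: xS; rewrite (subsetP B1S) | move: xS; rewrite (subsetP B2S)].
Qed.

Section Count.
Variable R : realFieldType.
Variable n : nat.
Variable p : 'I_n -> point R.
Hypothesis gp : general_position p.

Definition Fsum (T : {set 'I_n}) :=
  \sum_(A : {set 'I_n} | (A \subset T) && (#|A| == 3)) ((T :\: A \subset In p A) + (T :\: A \subset Out p A)).

Lemma In_notA (A : {set 'I_n}) x : x \in A -> x \notin In p A.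
Proof.
move=> xA; rewrite inE; apply/negP => /asboolP [O [r [H1 H2]]].
by move: H2; rewrite H1 // ltxx.
Qed.

Lemma Out_notA (A : {set 'I_n}) x : x \in A -> x \notin Out p A.
Proof. by move=> xA; rewrite !inE xA. Qed.

Lemma Fsum_eq e (T : {set 'I_n}) : (forall i j, key e (p i) = key e (p j) -> i = j) ->
  3 <= #|T| -> Fsum T = 2 * #|T| - 4.
Proof.
move=> Hkey T3; rewrite /Fsum.
have [hT|hT] : 3 < #|T| \/ 3 = #|T| by lia.
2:{
  rewrite (big_pred1 T); last first.
    move=> A /=; apply/andP/eqP => [[AT /eqP A3]|->]; last by rewrite subxx hT.
    by apply/eqP; rewrite eqEcard AT A3 -hT leqnn.
  by rewrite setDv !sub0set -hT. }
rewrite (eq_bigr (fun A => nat_of_bool (FAC p T A))); last first.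
  move=> A /andP [AT /eqP A3]; rewrite /FAC.
  case h1 : (T :\: A \subset In p A); case h2 : (T :\: A \subset Out p A) => //=.
  have : 0 < #|T :\: A| by rewrite cardsD (setIidPr AT) A3 subn_gt0.
  case/card_gt0P => x xTA.
  by move: (subsetP h2 x xTA); rewrite in_setC in_setU (subsetP h1 x xTA) orbT.
rewrite (eq_bigr (fun A => if FAC p T A then 1 else 0)); last by move=> A _; case: (FAC p T A).
rewrite -big_mkcondr sum1dep_card.
rewrite -(Facets_card gp Hkey); last by [].
by apply: eq_card => A; rewrite !inE.
Qed.

Lemma sum_Fsum m : 3 <= m ->
  \sum_(T : {set 'I_n} | #|T| == m) Fsum T =
  \sum_(A : {set 'I_n} | #|A| == 3) ('C(#|In p A|, m - 3) + 'C(#|Out p A|, m - 3)).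
Proof.
move=> m3; rewrite /Fsum.
rewrite (exchange_big_dep (fun A : {set 'I_n} => #|A| == 3)); last by move=> T A _ /andP [].
apply: eq_bigr => A /eqP A3; rewrite big_split /=.
have cnt (S : {set 'I_n}) : (forall x, x \in A -> x \notin S) ->
    \sum_(T : {set 'I_n} | (#|T| == m) && ((A \subset T) && (#|A| == 3))) (T :\: A \subset S)
    = 'C(#|S|, m - 3).
  move=> HS; rewrite -(@card_ext _ A S (m - 3) HS).
  rewrite (eq_bigr (fun T => if T :\: A \subset S then 1 else 0)); last first.
    by move=> T _; case: (T :\: A \subset S).
  rewrite -big_mkcondr sum1dep_card; apply: eq_card => T; rewrite !inE A3 eqxx andbT.
  by rewrite subnKC.
by rewrite !cnt //; [exact: Out_notA | exact: In_notA].
Qed.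

Lemma circle_order_In A : circle_order p A = #|In p A|.
Proof. by []. Qed.

Lemma AIn_card (A : {set 'I_n}) : #|A| = 3 -> #|A :|: In p A| = 3 + circle_order p A.
Proof.
move=> A3; rewrite cardsU A3 circle_order_In.
have -> : A :&: In p A = set0.
  apply/setP => x; rewrite !inE; apply/negbTE; apply/negP => /andP [xA xI].
  by move: (In_notA xA); rewrite inE xI.
by rewrite cards0 subn0.
Qed.

Lemma ord_le (A : {set 'I_n}) : #|A| = 3 -> circle_order p A <= n - 3.
Proof.
move=> A3; have := max_card (A :|: In p A); rewrite card_ord AIn_card //; lia.
Qed.

Lemma Out_card (A : {set 'I_n}) : #|A| = 3 -> #|Out p A| = n - 3 - circle_order p A.
Proof.
move=> A3; have := cardsC (A :|: In p A); rewrite card_ord AIn_card // => E.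
rewrite /Out; lia.
Qed.

Lemma sum_by_order (g : nat -> nat) : 3 <= n ->
  \sum_(A : {set 'I_n} | #|A| == 3) g (circle_order p A) =
  \sum_(i < n - 2) c_count p i * g i.
Proof.
move=> n3.
rewrite (eq_bigr (fun A => \sum_(i < n - 2 | circle_order p A == i) g i)); last first.
  move=> A /eqP A3.
  have lt : circle_order p A < n - 2 by have := ord_le A3; lia.
  rewrite (big_pred1 (Ordinal lt)) //.
rewrite (exchange_big_dep xpredT) //=.
apply: eq_bigr => i _.
rewrite /c_count -sum1dep_card big_distrl /=.
by apply: eq_bigr => A _; rewrite mul1n.
Qed.


End Count.


Theorem mainTheorem5 (R : realFieldType) (n : nat) (p : 'I_n -> point R) :
  (3 <= n)%N -> general_position p ->
  forall i : nat, (i <= n - 3)%N ->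
    (c_count p i + c_count p (n - i - 3) = 2 * (i + 1) * (n - 2 - i))%N.
Proof.
move=> n3 gp i hi.
have [e Hkey] := exists_eps gp.
pose s := fun j => (c_count p j + c_count p (n - 3 - j))%N.
pose g := fun j => (2 * (j.+1 * (n - 2 - j)))%N.
have sys : forall k, (k < n - 2)%N ->
    (\sum_(j < n - 2) s j * 'C(j, k) = \sum_(j < n - 2) g j * 'C(j, k))%N.
  move=> k hk.
  have -> : (\sum_(j < n - 2) g j * 'C(j, k) = 2 * (k.+1 * 'C(n, k.+3)))%N.
    rewrite (eq_bigr (fun j : 'I_(n - 2) => 2 * (j.+1 * (n - 2 - j) * 'C(j, k))))%N;
      last by move=> j _; rewrite /g -!mulnA.
    rewrite -big_distrr /= target_id.
    by have -> : (n - 2).+2 = n by lia.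
  rewrite /s.
  rewrite (eq_bigr (fun j : 'I_(n - 2) =>
      c_count p j * 'C(j, k) + c_count p (n - 3 - j) * 'C(j, k)))%N;
    last by move=> j _; rewrite mulnDl.
  rewrite big_split /=.
  have -> : (\sum_(j < n - 2) c_count p (n - 3 - j) * 'C(j, k) =
             \sum_(j < n - 2) c_count p j * 'C(n - 3 - j, k))%N.
    rewrite (reindex_inj rev_ord_inj) /=; apply: eq_bigr => j _.
    have hj := ltn_ord j.
    have -> : (n - 3 - (n - 2 - j.+1) = j)%N by lia.
    by have -> : (n - 2 - j.+1 = n - 3 - j)%N by lia.
  rewrite -big_split /=.
  rewrite (eq_bigr (fun j : 'I_(n - 2) => c_count p j * ('C(j, k) + 'C(n - 3 - j, k))))%N;
    last by move=> j _; rewrite mulnDr.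
  rewrite -(sum_by_order p (fun o => 'C(o, k) + 'C(n - 3 - o, k)))%N //.
  rewrite (eq_bigr (fun A => 'C(#|In p A|, k.+3 - 3) + 'C(#|Out p A|, k.+3 - 3)))%N;
    last first.
    move=> A /eqP A3; rewrite Out_card // circle_order_In.
    by have -> : (k.+3 - 3 = k)%N by lia.
  rewrite -sum_Fsum //.
  rewrite (eq_bigr (fun _ => 2 * k.+3 - 4))%N; last first.
    by move=> T /eqP hT; rewrite (Fsum_eq gp Hkey) ?hT.
  rewrite (eq_bigl (fun T => T \in [set T : {set 'I_n} | #|T| == k.+3])); last first.
    by move=> T; rewrite inE.
  rewrite big_const iter_addn_0 card_draws card_ord.
  have -> : (2 * k.+3 - 4 = 2 * k.+1)%N by lia.
  ring.
have hin : (i < n - 2)%N by lia.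
have := uniq_binom sys hin; rewrite /s /g.
have -> : (n - i - 3 = n - 3 - i)%N by lia.
move=> ->; rewrite addn1 mulnA; by [].
Qed.
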